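(* Let $N\ge 3$, $a>0$, $T>0$, and let $u,v\in C^{2,1}([a,\infty)\times[0,T))$ be two classical solutions of $$w_t=w_{rr}+\frac{N+1}{r}w_r+(Nw+rw_r)w,\qquad (r,t)\in[a,\infty)\times[0,T).$$ Assume $u(r,0)<v(r,0)$ for $r\in[a,\infty)$, $u(a,t)<v(a,t)$ for $t\in[0,T)$, and that $u$, $v$, $rv_r$ are uniformly bounded in $[a,\infty)\times[0,T)$. Then $u(r,t)<v(r,t)$ for all $(r,t)\in[a,\infty)\times[0,T)$. *)

(* Defs.v *)
From Stdlib Require Import Reals.
Open Scope R_scope.

Definition dom (a T : R) (r t : R) : Prop := a <= r /\ 0 <= t < T.

(* l is the derivative of f at x relative to the set D (one-sided at
   boundary points of D): difference quotients converge to l as y -> x, y in D. *)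
Definition deriv_within (D : R -> Prop) (f : R -> R) (x l : R) : Prop :=
  limit1_in (fun y => (f y - f x) / (y - x)) (fun y => D y /\ y <> x) l x.

Definition cont_on_dom (a T : R) (g : R -> R -> R) : Prop :=
  forall r t, dom a T r t ->
  forall eps, 0 < eps -> exists delta, 0 < delta /\
    forall r' t', dom a T r' t' -> Rabs (r' - r) < delta -> Rabs (t' - t) < delta ->
      Rabs (g r' t' - g r t) < eps.

Definition C21 (a T : R) (u ur urr ut : R -> R -> R) : Prop :=
  cont_on_dom a T u /\ cont_on_dom a T ur /\ cont_on_dom a T urr /\ cont_on_dom a T ut /\
  (forall r t, dom a T r t ->
     deriv_within (fun s => a <= s) (fun s => u s t) r (ur r t) /\
     deriv_within (fun s => a <= s) (fun s => ur s t) r (urr r t) /\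
     deriv_within (fun s => 0 <= s < T) (fun s => u r s) t (ut r t)).

Definition classical_solution (N : nat) (a T : R) (u ur urr ut : R -> R -> R) : Prop :=
  C21 a T u ur urr ut /\
  forall r t, dom a T r t ->
    ut r t = urr r t + (INR N + 1) / r * ur r t + (INR N * u r t + r * ur r t) * u r t.

(* Main.v *)
Require Import Defs.
From Stdlib Require Import Reals Lra Lia Psatz Classical.
Open Scope R_scope.

Definition jc (P : R -> R -> Prop) (f : R -> R -> R) : Prop :=
  forall r t, P r t -> forall eps, 0 < eps -> exists delta, 0 < delta /\
    forall r' t', P r' t' -> Rabs (r' - r) < delta -> Rabs (t' - t) < delta ->
      Rabs (f r' t' - f r t) < eps.

Lemma jc_sub P Q f : (forall r t, Q r t -> P r t) -> jc P f -> jc Q f.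
Proof.
  intros HQ Hf r t Hq eps He. destruct (Hf r t (HQ _ _ Hq) eps He) as [d [Hd H]].
  exists d; split; auto.
Qed.

Lemma jc_plus P f g : jc P f -> jc P g -> jc P (fun r t => f r t + g r t).
Proof.
  intros Hf Hg r t Hp eps He.
  destruct (Hf r t Hp (eps/2)) as [d1 [Hd1 H1]]; [lra|].
  destruct (Hg r t Hp (eps/2)) as [d2 [Hd2 H2]]; [lra|].
  exists (Rmin d1 d2); split; [apply Rmin_pos; auto|].
  intros r' t' Hp' Hr Ht.
  assert (A1 := H1 r' t' Hp' (Rlt_le_trans _ _ _ Hr (Rmin_l _ _)) (Rlt_le_trans _ _ _ Ht (Rmin_l _ _))).
  assert (A2 := H2 r' t' Hp' (Rlt_le_trans _ _ _ Hr (Rmin_r _ _)) (Rlt_le_trans _ _ _ Ht (Rmin_r _ _))).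
  replace (f r' t' + g r' t' - (f r t + g r t)) with ((f r' t' - f r t) + (g r' t' - g r t)) by ring.
  eapply Rle_lt_trans; [apply Rabs_triang|]. lra.
Qed.

Lemma jc_scal P f c : jc P f -> jc P (fun r t => c * f r t).
Proof.
  intros Hf r t Hp eps He.
  destruct (Hf r t Hp (eps/(Rabs c + 1))) as [d1 [Hd1 H1]].
  { apply Rdiv_lt_0_compat; auto. pose proof (Rabs_pos c); lra. }
  exists d1; split; auto. intros r' t' Hp' Hr Ht.
  specialize (H1 r' t' Hp' Hr Ht).
  replace (c * f r' t' - c * f r t) with (c * (f r' t' - f r t)) by ring.
  rewrite Rabs_mult. pose proof (Rabs_pos c). pose proof (Rabs_pos (f r' t' - f r t)).
  apply Rle_lt_trans with ((Rabs c + 1) * Rabs (f r' t' - f r t)); [nra|].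
  apply Rmult_lt_reg_l with (/(Rabs c + 1)).
  { apply Rinv_0_lt_compat; lra. }
  rewrite <- Rmult_assoc, Rinv_l by lra. unfold Rdiv in H1. lra.
Qed.

Lemma jc_mult P f g : jc P f -> jc P g -> jc P (fun r t => f r t * g r t).
Proof.
  intros Hf Hg r t Hp eps He.
  set (f0 := f r t). set (g0 := g r t).
  assert (Hf0 := Rabs_pos f0). assert (Hg0 := Rabs_pos g0).
  destruct (Hf r t Hp (Rmin 1 (eps/(2*(Rabs g0 + 1))))) as [d1 [Hd1 H1]].
  { apply Rmin_pos; [lra|]. apply Rdiv_lt_0_compat; lra. }
  destruct (Hg r t Hp (eps/(2*(Rabs f0 + 2)))) as [d2 [Hd2 H2]].
  { apply Rdiv_lt_0_compat; lra. }
  exists (Rmin d1 d2); split; [apply Rmin_pos; auto|].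
  intros r' t' Hp' Hr Ht.
  assert (A1 := H1 r' t' Hp' (Rlt_le_trans _ _ _ Hr (Rmin_l _ _)) (Rlt_le_trans _ _ _ Ht (Rmin_l _ _))).
  assert (A2 := H2 r' t' Hp' (Rlt_le_trans _ _ _ Hr (Rmin_r _ _)) (Rlt_le_trans _ _ _ Ht (Rmin_r _ _))).
  fold f0 in A1. fold g0 in A2. fold f0. fold g0.
  set (x := f r' t') in *. set (y := g r' t') in *.
  assert (B1 : Rabs (x - f0) < 1) by (eapply Rlt_le_trans; [apply A1| apply Rmin_l]).
  assert (B2 : Rabs (x - f0) < eps/(2*(Rabs g0 + 1))) by (eapply Rlt_le_trans; [apply A1| apply Rmin_r]).
  assert (Hx : Rabs x <= Rabs f0 + 1).
  { replace x with (f0 + (x - f0)) by ring. eapply Rle_trans; [apply Rabs_triang|]. lra. }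
  replace (x * y - f0 * g0) with (x * (y - g0) + g0 * (x - f0)) by ring.
  eapply Rle_lt_trans; [apply Rabs_triang|]. rewrite !Rabs_mult.
  assert (C1 : Rabs x * Rabs (y - g0) <= (Rabs f0 + 2) * (eps/(2*(Rabs f0 + 2)))).
  { apply Rmult_le_compat; try apply Rabs_pos; lra. }
  assert (C2 : Rabs g0 * Rabs (x - f0) <= (Rabs g0 + 1) * (eps/(2*(Rabs g0 + 1)))).
  { apply Rmult_le_compat; try apply Rabs_pos; lra. }
  assert (E1 : (Rabs f0 + 2) * (eps/(2*(Rabs f0 + 2))) = eps/2) by (field; lra).
  assert (E2 : (Rabs g0 + 1) * (eps/(2*(Rabs g0 + 1))) = eps/2) by (field; lra).
  assert (Rabs g0 * Rabs (x - f0) < eps/2 \/ Rabs x * Rabs (y - g0) < eps/2).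
  { destruct (Req_dec (Rabs g0) 0) as [Z|Z].
    - left. rewrite Z. lra.
    - left. assert (0 < Rabs g0) by lra.
      apply Rle_lt_trans with (Rabs g0 * (eps/(2*(Rabs g0 + 1)))).
      + apply Rmult_le_compat_l; lra.
      + rewrite <- E2. apply Rmult_lt_compat_r; [apply Rdiv_lt_0_compat|]; lra. }
  lra.
Qed.

Lemma jc_t P g : (forall t, continuity_pt g t) -> jc P (fun r t => g t).
Proof.
  intros Hg r t Hp eps He. destruct (Hg t eps He) as [d [Hd H]].
  exists d; split; auto. intros r' t' _ _ Ht.
  destruct (Req_dec t' t) as [->|Hn]. { rewrite Rminus_eq_0, Rabs_R0; auto. }
  apply (H t'). split; [split; [exact I| auto]| exact Ht].
Qed.

Lemma jc_r P g : (forall r, continuity_pt g r) -> jc P (fun r t => g r).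
Proof.
  intros Hg r t Hp eps He. destruct (Hg r eps He) as [d [Hd H]].
  exists d; split; auto. intros r' t' _ Hr _.
  destruct (Req_dec r' r) as [->|Hn]. { rewrite Rminus_eq_0, Rabs_R0; auto. }
  apply (H r'). split; [split; [exact I| auto]| exact Hr].
Qed.

Lemma dw_dpl D f x l : deriv_within D f x l ->
  (exists eta, 0 < eta /\ forall y, Rabs (y - x) < eta -> D y) ->
  derivable_pt_lim f x l.
Proof.
  intros H [eta [He HD]] eps Heps.
  destruct (H eps Heps) as [alp [Ha Hl]].
  assert (Hm : 0 < Rmin alp eta) by (apply Rmin_pos; lra).
  exists (mkposreal _ Hm). intros h Hh0 Hh. simpl in Hh.
  assert (Hy : Rabs (x + h - x) < Rmin alp eta) by (replace (x+h-x) with h by ring; auto).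
  specialize (Hl (x + h)). simpl in Hl. unfold R_dist in Hl.
  replace ((f (x + h) - f x) / h) with ((f (x + h) - f x) / (x + h - x)) by (f_equal; ring).
  apply Hl. split; [split|].
  - apply HD. eapply Rlt_le_trans; [apply Hy| apply Rmin_r].
  - intro E. apply Hh0. lra.
  - eapply Rlt_le_trans; [apply Hy| apply Rmin_l].
Qed.

Lemma dpl_ext f g x l l' : (forall y, f y = g y) -> l = l' ->
  derivable_pt_lim f x l -> derivable_pt_lim g x l'.
Proof.
  intros Hfg <- H eps He. destruct (H eps He) as [d Hd]. exists d. intros h H1 H2.
  rewrite <- !Hfg. auto.
Qed.

Lemma dpl_plus f g x l1 l2 : derivable_pt_lim f x l1 -> derivable_pt_lim g x l2 ->
  derivable_pt_lim (fun y => f y + g y) x (l1 + l2).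
Proof. intros. exact (derivable_pt_lim_plus f g x l1 l2 H H0). Qed.
Lemma dpl_minus f g x l1 l2 : derivable_pt_lim f x l1 -> derivable_pt_lim g x l2 ->
  derivable_pt_lim (fun y => f y - g y) x (l1 - l2).
Proof. intros. exact (derivable_pt_lim_minus f g x l1 l2 H H0). Qed.
Lemma dpl_mult f g x l1 l2 : derivable_pt_lim f x l1 -> derivable_pt_lim g x l2 ->
  derivable_pt_lim (fun y => f y * g y) x (l1 * g x + f x * l2).
Proof. intros. exact (derivable_pt_lim_mult f g x l1 l2 H H0). Qed.
Lemma dpl_const c x : derivable_pt_lim (fun _ => c) x 0.
Proof. exact (derivable_pt_lim_const c x). Qed.
Lemma dpl_id x : derivable_pt_lim (fun y => y) x 1.
Proof. exact (derivable_pt_lim_id x). Qed.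
Lemma dpl_scal c f x l : derivable_pt_lim f x l -> derivable_pt_lim (fun y => c * f y) x (c * l).
Proof. intros. exact (derivable_pt_lim_scal f c x l H). Qed.
Lemma dpl_expk k x : derivable_pt_lim (fun y => exp (k * y)) x (k * exp (k * x)).
Proof.
  assert (H := derivable_pt_lim_comp (fun y => k * y) exp x k (exp (k * x))).
  eapply dpl_ext; [| | apply H]; [reflexivity| ring| |].
  - eapply dpl_ext; [| | apply (dpl_scal k _ x 1 (dpl_id x))]; [reflexivity| ring].
  - apply derivable_pt_lim_exp.
Qed.

Lemma cont_expk k x : continuity_pt (fun y => exp (k * y)) x.
Proof. apply derivable_continuous_pt. exists (k * exp (k * x)). apply dpl_expk. Qed.

Lemma cont_sq x : continuity_pt (fun y => 1 + y * y) x.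
Proof. apply derivable_continuous_pt. exists (0 + (1 * x + x * 1)).
  apply dpl_plus; [apply dpl_const| apply dpl_mult; apply dpl_id]. Qed.

Lemma dpl_pos_left f x l : derivable_pt_lim f x l -> 0 < l ->
  exists d, 0 < d /\ forall y, x - d < y < x -> f y < f x.
Proof.
  intros H Hl. destruct (H (l/2)) as [d Hd]; [lra|].
  exists d; split; [apply cond_pos|]. intros y Hy.
  specialize (Hd (y - x)). replace (x + (y - x)) with y in Hd by ring.
  assert (Q : Rabs ((f y - f x) / (y - x) - l) < l / 2).
  { apply Hd; [lra|]. rewrite Rabs_left; lra. }
  apply Rabs_def2 in Q. destruct Q as [Q1 Q2].
  assert (0 < (f y - f x) / (y - x)) by lra.
  assert (y - x < 0) by lra.
  assert (Hq : (f y - f x) = (f y - f x) / (y - x) * (y - x)) by (field; lra).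
  nra.
Qed.

Lemma dpl_neg_left f x l : derivable_pt_lim f x l -> l < 0 ->
  exists d, 0 < d /\ forall y, x - d < y < x -> f y > f x.
Proof.
  intros H Hl. destruct (H (-l/2)) as [d Hd]; [lra|].
  exists d; split; [apply cond_pos|]. intros y Hy.
  specialize (Hd (y - x)). replace (x + (y - x)) with y in Hd by ring.
  assert (Q : Rabs ((f y - f x) / (y - x) - l) < - l / 2).
  { apply Hd; [lra|]. rewrite Rabs_left; lra. }
  apply Rabs_def2 in Q. destruct Q as [Q1 Q2].
  assert ((f y - f x) / (y - x) < 0) by lra.
  assert (y - x < 0) by lra.
  assert (Hq : (f y - f x) = (f y - f x) / (y - x) * (y - x)) by (field; lra).
  nra.
Qed.

Lemma dpl_min_zero f x l p q : derivable_pt_lim f x l -> p < x < q ->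
  (forall y, p < y < q -> f x <= f y) -> l = 0.
Proof.
  intros H Hx Hm.
  assert (pr : derivable_pt f x) by (exists l; exact H).
  assert (E := deriv_minimum f p q x pr (proj1 Hx) (proj2 Hx) (fun y H1 H2 => Hm y (conj H1 H2))).
  rewrite <- E. symmetry. apply derive_pt_eq_0. exact H.
Qed.

Definition Rect (a bb t1 : R) (r t : R) : Prop := a <= r <= bb /\ 0 <= t <= t1.

Lemma clamp_dist a b c x : a <= c <= b -> Rabs (Rmax a (Rmin b x) - c) <= Rabs (x - c).
Proof.
  intros Hc. unfold Rmax, Rmin.
  destruct (Rle_dec b x); destruct (Rle_dec a _); split_Rabs; lra.
Qed.
Lemma clamp_in a b x : a <= b -> a <= Rmax a (Rmin b x) <= b.
Proof. intros. unfold Rmax, Rmin. destruct (Rle_dec b x); destruct (Rle_dec a _); lra. Qed.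
Lemma clamp_id a b x : a <= x <= b -> Rmax a (Rmin b x) = x.
Proof. intros. unfold Rmax, Rmin. destruct (Rle_dec b x); destruct (Rle_dec a _); lra. Qed.

Lemma min_r a bb t1 w t : jc (Rect a bb t1) w -> a <= bb -> 0 <= t <= t1 ->
  exists rm, a <= rm <= bb /\ forall r, a <= r <= bb -> w rm t <= w r t.
Proof.
  intros Hw HaR Ht.
  destruct (continuity_ab_min (fun x => w (Rmax a (Rmin bb x)) t) a bb HaR) as [m [Hm1 Hm2]].
  - intros c Hc eps He. destruct (Hw c t (conj Hc Ht) eps He) as [d [Hd H]].
    exists d; split; [lra|]. intros x [_ Hx]. simpl in *. unfold R_dist in *.
    rewrite (clamp_id a bb c Hc). apply H.
    + split; [apply clamp_in; auto| auto].
    + eapply Rle_lt_trans; [apply clamp_dist; auto| auto].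
    + rewrite Rminus_diag, Rabs_R0; auto.
  - exists m. split; auto. intros r Hr. specialize (Hm1 r Hr). simpl in Hm1.
    rewrite (clamp_id a bb r Hr), (clamp_id a bb m Hm2) in Hm1. auto.
Qed.

Lemma min_t a bb t1 w r : jc (Rect a bb t1) w -> 0 <= t1 -> a <= r <= bb ->
  exists tm, 0 <= tm <= t1 /\ forall t, 0 <= t <= t1 -> w r tm <= w r t.
Proof.
  intros Hw HaR Hr.
  destruct (continuity_ab_min (fun x => w r (Rmax 0 (Rmin t1 x))) 0 t1 HaR) as [m [Hm1 Hm2]].
  - intros c Hc eps He. destruct (Hw r c (conj Hr Hc) eps He) as [d [Hd H]].
    exists d; split; [lra|]. intros x [_ Hx]. simpl in *. unfold R_dist in *.
    rewrite (clamp_id 0 t1 c Hc). apply H.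
    + split; [auto| apply clamp_in; auto].
    + rewrite Rminus_diag, Rabs_R0; auto.
    + eapply Rle_lt_trans; [apply clamp_dist; auto| auto].
  - exists m. split; auto. intros t Ht. specialize (Hm1 t Ht). simpl in Hm1.
    rewrite (clamp_id 0 t1 t Ht), (clamp_id 0 t1 m Hm2) in Hm1. auto.
Qed.

Lemma tube a bb t1 w sg eps : a <= bb -> 0 <= sg <= t1 -> jc (Rect a bb t1) w -> 0 < eps ->
  exists d, 0 < d /\ forall r s, a <= r <= bb -> 0 <= s <= t1 -> Rabs (s - sg) < d ->
    Rabs (w r s - w r sg) < eps.
Proof.
  intros HaR Hsg Hw He.
  assert (loc : forall c, a <= c <= bb -> exists d0, 0 < d0 /\ forall r s, a <= r <= bb -> 0 <= s <= t1 ->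
     Rabs (r - c) < d0 -> Rabs (s - sg) < d0 -> Rabs (w r s - w r sg) < eps).
  { intros c Hc. destruct (Hw c sg (conj Hc Hsg) (eps/2)) as [d [Hd H]]; [lra|].
    exists d; split; auto. intros r s Hr Hs H1 H2.
    assert (A1 := H r s (conj Hr Hs) H1 H2).
    assert (A2 := H r sg (conj Hr Hsg) H1 ltac:(rewrite Rminus_diag, Rabs_R0; auto)).
    replace (w r s - w r sg) with ((w r s - w c sg) - (w r sg - w c sg)) by ring.
    eapply Rle_lt_trans; [apply Rabs_triang|]. rewrite Rabs_Ropp. lra. }
  set (E := fun x => a <= x <= bb /\ exists d, 0 < d /\ forall r s, a <= r <= x -> 0 <= s <= t1 ->
     Rabs (s - sg) < d -> Rabs (w r s - w r sg) < eps).
  assert (Ea : E a).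
  { destruct (loc a (conj (Rle_refl a) HaR)) as [d0 [Hd0 H0]]. split; [lra|].
    exists d0; split; auto. intros r s Hr Hs Hs'. apply H0; auto; [lra|].
    replace (r - a) with 0 by lra. rewrite Rabs_R0; auto. }
  assert (Hb : bound E) by (exists bb; intros x [Hx _]; lra).
  destruct (completeness E Hb (ex_intro _ a Ea)) as [rho [Hub Hlub]].
  assert (Hrho : a <= rho <= bb).
  { split; [apply Hub; auto| apply Hlub; intros x [Hx _]; lra]. }
  destruct (loc rho Hrho) as [d0 [Hd0 H0]].
  assert (Hx : exists x, E x /\ rho - d0 < x).
  { apply NNPP. intro Hn. assert (rho <= rho - d0); [|lra].
    apply Hlub. intros x Ex. apply Rnot_lt_le. intro Hlt. apply Hn. exists x; auto. }
  destruct Hx as [x [[Hx1 [dx [Hdx Hx2]]] Hxr]].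
  set (y := Rmin bb (rho + d0/2)).
  assert (Ey : E y).
  { split. { unfold y, Rmin. destruct (Rle_dec bb _); lra. }
    exists (Rmin dx d0); split; [apply Rmin_pos; auto|].
    intros r s Hr Hs Hs'.
    destruct (Rle_dec r x).
    - apply Hx2; auto; [lra|]. eapply Rlt_le_trans; [apply Hs'| apply Rmin_l].
    - apply H0; auto.
      + split; [lra|]. assert (y <= bb) by apply Rmin_l. lra.
      + assert (y <= rho + d0/2) by apply Rmin_r. split_Rabs; lra.
      + eapply Rlt_le_trans; [apply Hs'| apply Rmin_r]. }
  assert (Hy : y <= rho) by (apply Hub; auto).
  unfold y in *. unfold Rmin in *. destruct (Rle_dec bb (rho + d0/2)); [|lra].
  destruct Ey as [_ [d [Hd HH]]]. exists d; split; auto.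
Qed.

Lemma core (a bb t1 : R) (w wr wrr wt : R -> R -> R) :
  a < bb -> 0 <= t1 ->
  jc (Rect a bb t1) w ->
  (forall r t, a < r < bb -> 0 <= t <= t1 -> derivable_pt_lim (fun s => w s t) r (wr r t)) ->
  (forall r t, a < r < bb -> 0 <= t <= t1 -> derivable_pt_lim (fun s => wr s t) r (wrr r t)) ->
  (forall r t, a < r < bb -> 0 < t <= t1 -> derivable_pt_lim (fun s => w r s) t (wt r t)) ->
  (forall r, a <= r <= bb -> 0 <= w r 0) ->
  (forall t, 0 <= t <= t1 -> 0 <= w a t) ->
  (forall t, 0 <= t <= t1 -> 0 <= w bb t) ->
  (forall r t, a < r < bb -> 0 < t <= t1 -> w r t < 0 -> wr r t = 0 -> 0 <= wrr r t -> 0 < wt r t) ->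
  forall r t, a <= r <= bb -> 0 <= t <= t1 -> 0 <= w r t.
Proof.
  intros Hab Ht1 Hw Hdr Hdrr Hdt Hinit Hleft Hright Hpde r0 t0 Hr0 Ht0.
  apply Rnot_lt_le. intro Hneg. set (m := w r0 t0) in *.
  set (E := fun x => 0 <= x <= t0 /\ forall s r, 0 <= s <= x -> a <= r <= bb -> m < w r s).
  assert (E0 : E 0).
  { split; [lra|]. intros s r Hs Hr. replace s with 0 by lra. specialize (Hinit r Hr). lra. }
  assert (Hb : bound E) by (exists t0; intros x [Hx _]; lra).
  destruct (completeness E Hb (ex_intro _ 0 E0)) as [sg [Hub Hlub]].
  assert (Hsg : 0 <= sg <= t0).
  { split; [apply Hub; auto| apply Hlub; intros x [Hx _]; lra]. }
  assert (Hbefore : forall s r, 0 <= s < sg -> a <= r <= bb -> m < w r s).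
  { intros s r Hs Hr. assert (Hx : exists x, E x /\ s < x).
    { apply NNPP. intro Hn. assert (sg <= s); [|lra].
      apply Hlub. intros x Ex. apply Rnot_lt_le. intro Hlt. apply Hn. exists x; auto. }
    destruct Hx as [x [[_ Hx] Hsx]]. apply Hx; auto; lra. }
  assert (HA : exists r, a <= r <= bb /\ w r sg <= m).
  { apply NNPP. intro Hn.
    assert (Hall : forall r, a <= r <= bb -> m < w r sg).
    { intros r Hr. apply Rnot_le_lt. intro. apply Hn. exists r; auto. }
    destruct (min_r a bb t1 w sg Hw ltac:(lra) ltac:(lra)) as [rm [Hrm Hmin]].
    assert (Hmu := Hall rm Hrm).
    destruct (tube a bb t1 w sg (w rm sg - m) ltac:(lra) ltac:(lra) Hw ltac:(lra)) as [d [Hd Htube]].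
    set (y := Rmin t0 (sg + d/2)).
    assert (Ey : E y).
    { split. { unfold y, Rmin. destruct (Rle_dec t0 _); lra. }
      intros s r Hs Hr. destruct (Rlt_dec s sg) as [Hlt|Hge].
      - apply Hbefore; auto; lra.
      - assert (y <= sg + d/2) by apply Rmin_r. assert (y <= t0) by apply Rmin_l.
        assert (Q := Htube r s Hr ltac:(lra) ltac:(split_Rabs; lra)).
        specialize (Hmin r Hr). apply Rabs_def2 in Q. lra. }
    assert (Hy : y <= sg) by (apply Hub; auto).
    unfold y, Rmin in *. destruct (Rle_dec t0 (sg + d/2)); [|lra].
    assert (sg = t0) by lra. subst sg. specialize (Hall r0 Hr0). unfold m in Hall. lra. }
  destruct HA as [rA [HrA HwA]].
  assert (Hsgpos : 0 < sg).
  { destruct (Req_dec sg 0) as [Z|Z]; [|lra]. rewrite Z in HwA. specialize (Hinit rA HrA). lra. }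
  destruct (min_r a bb t1 w sg Hw ltac:(lra) ltac:(lra)) as [rs [Hrs Hmin]].
  assert (Hws : w rs sg <= m) by (specialize (Hmin rA HrA); lra).
  assert (Hrs' : a < rs < bb).
  { split.
    - destruct (Req_dec rs a) as [Z|Z]; [|lra]. rewrite Z in Hws. specialize (Hleft sg ltac:(lra)). lra.
    - destruct (Req_dec rs bb) as [Z|Z]; [|lra]. rewrite Z in Hws. specialize (Hright sg ltac:(lra)). lra. }
  assert (Hsgt : 0 < sg <= t1) by lra.
  assert (Hwr0 : wr rs sg = 0).
  { apply (dpl_min_zero (fun s => w s sg) rs (wr rs sg) a bb (Hdr rs sg Hrs' ltac:(lra)) Hrs').
    intros y Hy. apply Hmin. lra. }
  assert (Hwrr : 0 <= wrr rs sg).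
  { apply Rnot_lt_le. intro Hn.
    destruct (dpl_neg_left _ _ _ (Hdrr rs sg Hrs' ltac:(lra)) Hn) as [d [Hd Hl]].
    set (y0 := rs - Rmin (d/2) ((rs - a)/2)).
    assert (Hm1 : Rmin (d/2) ((rs - a)/2) <= d/2) by apply Rmin_l.
    assert (Hm2 : Rmin (d/2) ((rs - a)/2) <= (rs - a)/2) by apply Rmin_r.
    assert (Hm3 : 0 < Rmin (d/2) ((rs - a)/2)) by (apply Rmin_pos; lra).
    destruct (MVT_cor2 (fun s => w s sg) (fun s => wr s sg) y0 rs ltac:(unfold y0; lra)) as [c [Hc1 Hc2]].
    { intros c Hc. apply Hdr; [unfold y0 in Hc; lra| lra]. }
    assert (Hwc : wr c sg > 0).
    { destruct (Req_dec c rs) as [Z|Z]; [lra|].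
      specialize (Hl c ltac:(unfold y0 in Hc2; lra)). simpl in Hl. lra. }
    assert (w y0 sg < w rs sg) by (assert (rs - y0 > 0) by (unfold y0; lra); nra).
    specialize (Hmin y0 ltac:(unfold y0; lra)). lra. }
  assert (Hwt := Hpde rs sg Hrs' Hsgt ltac:(lra) Hwr0 Hwrr).
  destruct (dpl_pos_left _ _ _ (Hdt rs sg Hrs' Hsgt) Hwt) as [d [Hd Hl]].
  set (s := sg - Rmin (d/2) (sg/2)).
  assert (Hm1 : Rmin (d/2) (sg/2) <= d/2) by apply Rmin_l.
  assert (Hm2 : Rmin (d/2) (sg/2) <= sg/2) by apply Rmin_r.
  assert (Hm3 : 0 < Rmin (d/2) (sg/2)) by (apply Rmin_pos; lra).
  specialize (Hl s ltac:(unfold s; lra)). simpl in Hl.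
  specialize (Hbefore s rs ltac:(unfold s; lra) ltac:(lra)). lra.
Qed.

Lemma exp_le x y : x <= y -> exp x <= exp y.
Proof. intros H. destruct (Req_dec x y) as [->|N]; [lra|]. left. apply exp_increasing. lra. Qed.

Lemma abs_bnd x M : Rabs x <= M -> -M <= x <= M.
Proof. intros. split_Rabs; lra. Qed.

Lemma jc_ext P f g : (forall r t, f r t = g r t) -> jc P f -> jc P g.
Proof. intros E H r t Hp eps He. destruct (H r t Hp eps He) as [d [Hd Hh]].
  exists d; split; auto. intros. rewrite <- !E. auto. Qed.

Lemma C21_dr a T u ur urr ut r t : C21 a T u ur urr ut -> a < r -> 0 <= t < T ->
  derivable_pt_lim (fun s => u s t) r (ur r t) /\ derivable_pt_lim (fun s => ur s t) r (urr r t).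
Proof.
  intros [_ [_ [_ [_ H]]]] Hr Ht. destruct (H r t (conj (Rlt_le _ _ Hr) Ht)) as [H1 [H2 _]].
  assert (Heta : exists eta, 0 < eta /\ forall y, Rabs (y - r) < eta -> a <= y).
  { exists (r - a); split; [lra|]. intros y Hy. split_Rabs; lra. }
  split; eapply dw_dpl; eauto.
Qed.

Lemma C21_dt a T u ur urr ut r t : C21 a T u ur urr ut -> a <= r -> 0 < t < T ->
  derivable_pt_lim (fun s => u r s) t (ut r t).
Proof.
  intros [_ [_ [_ [_ H]]]] Hr Ht. destruct (H r t (conj Hr (conj (Rlt_le _ _ (proj1 Ht)) (proj2 Ht)))) as [_ [_ H3]].
  eapply dw_dpl; eauto. exists (Rmin t (T - t)); split; [apply Rmin_pos; lra|].
  intros y Hy. assert (Rmin t (T - t) <= t) by apply Rmin_l. assert (Rmin t (T - t) <= T - t) by apply Rmin_r.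
  split_Rabs; lra.
Qed.

Lemma pde_diff N a T u ur urr ut v vr vrr vt r t :
  classical_solution N a T u ur urr ut -> classical_solution N a T v vr vrr vt ->
  0 < a -> dom a T r t ->
  vt r t - ut r t = (vrr r t - urr r t) + ((INR N + 1) / r + r * u r t) * (vr r t - ur r t)
     + (INR N * (u r t + v r t) + r * vr r t) * (v r t - u r t).
Proof.
  intros [_ Hu] [_ Hv] Ha Hd. rewrite (Hu r t Hd), (Hv r t Hd). destruct Hd. field. lra.
Qed.

Lemma step1 N a T u ur urr ut v vr vrr vt M : 0 < a -> 0 < T ->
  classical_solution N a T u ur urr ut -> classical_solution N a T v vr vrr vt ->
  (forall r, a <= r -> u r 0 < v r 0) -> (forall t, 0 <= t < T -> u a t < v a t) ->
  (forall r t, dom a T r t -> Rabs (u r t) <= M /\ Rabs (v r t) <= M /\ Rabs (r * vr r t) <= M) ->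
  forall r t, dom a T r t -> u r t <= v r t.
Proof.
  intros Ha HT Hsu Hsv Hinit Hbd HM r0 t0 Hd0.
  assert (HM0 : 0 <= M) by (destruct (HM a 0 ltac:(split; lra)) as [H _]; pose proof (Rabs_pos (u a 0)); lra).
  assert (HN : 0 <= INR N) by apply pos_INR.
  destruct Hd0 as [Hr0 Ht0].
  apply Rnot_lt_le; intro Hneg.
  set (lam := 2 * INR N * M + M + 1).
  set (C := 2 * INR N + 4 + 2 * M).
  assert (HNM : 0 <= INR N * M) by nra.
  assert (Hlam : 0 < lam) by (unfold lam; lra). assert (HC : 0 < C) by (unfold C; lra).
  set (E0 := exp ((- lam) * t0)). set (F0 := exp (C * t0)).
  assert (HE0 : 0 < E0) by apply exp_pos. assert (HF0 : 0 < F0) by apply exp_pos.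
  set (del := - E0 * (v r0 t0 - u r0 t0) / (2 * (F0 * (1 + r0 * r0)))).
  assert (Hdel : 0 < del).
  { unfold del. apply Rdiv_lt_0_compat; [nra|]. nra. }
  set (bb := r0 + 1 + 2 * M / del).
  assert (HMd : 0 <= 2 * M / del) by (unfold Rdiv; apply Rmult_le_pos; [lra| left; apply Rinv_0_lt_compat; lra]).
  assert (Hbb : a < bb) by (unfold bb; lra).
  set (W := fun r t => exp ((- lam) * t) * (v r t - u r t) + del * (exp (C * t) * (1 + r * r))).
  set (WR := fun r t => exp ((- lam) * t) * (vr r t - ur r t) + del * (exp (C * t) * (2 * r))).
  set (WRR := fun r t => exp ((- lam) * t) * (vrr r t - urr r t) + del * (exp (C * t) * 2)).
  set (WT := fun r t => (- lam) * exp ((- lam) * t) * (v r t - u r t)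
                        + exp ((- lam) * t) * (vt r t - ut r t) + del * (C * exp (C * t) * (1 + r * r))).
  assert (Hsub : forall r t, Rect a bb t0 r t -> dom a T r t).
  { intros r t [H1 H2]. split; lra. }
  assert (Hcore : forall r t, a <= r <= bb -> 0 <= t <= t0 -> 0 <= W r t).
  { assert (Hcu := proj1 (proj1 Hsu)). assert (Hcv := proj1 (proj1 Hsv)).
    apply (core a bb t0 W WR WRR WT Hbb (proj1 Ht0)).
    - unfold W; cbv beta. apply jc_plus.
      + apply jc_mult; [apply jc_t; intro; apply cont_expk|].
        apply (jc_ext _ (fun r t => v r t + (-1) * u r t)); [intros; ring|].
        apply jc_plus; [|apply jc_scal]; eapply jc_sub; eauto.
      + apply jc_scal. apply jc_mult; [apply jc_t; intro; apply cont_expk| apply jc_r; intro; apply cont_sq].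
    - intros r t Hr Ht. destruct (C21_dr _ _ _ _ _ _ r t (proj1 Hsu) ltac:(lra) ltac:(lra)) as [Du _].
      destruct (C21_dr _ _ _ _ _ _ r t (proj1 Hsv) ltac:(lra) ltac:(lra)) as [Dv _].
      pose proof (dpl_plus _ _ _ _ _ (dpl_scal (exp ((- lam) * t)) _ _ _ (dpl_minus _ _ _ _ _ Dv Du))
         (dpl_scal del _ _ _ (dpl_scal (exp (C * t)) _ _ _ (dpl_plus _ _ _ _ _ (dpl_const 1 r) (dpl_mult _ _ _ _ _ (dpl_id r) (dpl_id r)))))) as H.
      eapply dpl_ext; [| | exact H]; [intro; unfold W; reflexivity| unfold WR; ring].
    - intros r t Hr Ht. destruct (C21_dr _ _ _ _ _ _ r t (proj1 Hsu) ltac:(lra) ltac:(lra)) as [_ Du].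
      destruct (C21_dr _ _ _ _ _ _ r t (proj1 Hsv) ltac:(lra) ltac:(lra)) as [_ Dv].
      pose proof (dpl_plus _ _ _ _ _ (dpl_scal (exp ((- lam) * t)) _ _ _ (dpl_minus _ _ _ _ _ Dv Du))
         (dpl_scal del _ _ _ (dpl_scal (exp (C * t)) _ _ _ (dpl_scal 2 _ _ _ (dpl_id r))))) as H.
      eapply dpl_ext; [| | exact H]; [intro; unfold WR; reflexivity| unfold WRR; ring].
    - intros r t Hr Ht. assert (Du := C21_dt _ _ _ _ _ _ r t (proj1 Hsu) ltac:(lra) ltac:(lra)).
      assert (Dv := C21_dt _ _ _ _ _ _ r t (proj1 Hsv) ltac:(lra) ltac:(lra)).
      pose proof (dpl_plus _ _ _ _ _ (dpl_mult _ _ _ _ _ (dpl_expk (- lam) t) (dpl_minus _ _ _ _ _ Dv Du))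
         (dpl_scal del _ _ _ (dpl_mult _ _ _ _ _ (dpl_expk C t) (dpl_const (1 + r * r) t)))) as H.
      eapply dpl_ext; [| | exact H]; [intro; unfold W; reflexivity| unfold WT; ring].
    - intros r Hr. unfold W; cbv beta. rewrite !Rmult_0_r, exp_0. specialize (Hinit r ltac:(lra)). nra.
    - intros t Ht. unfold W; cbv beta. specialize (Hbd t ltac:(lra)).
      pose proof (exp_pos ((- lam) * t)). pose proof (exp_pos (C * t)). apply Rplus_le_le_0_compat; [apply Rmult_le_pos; lra| apply Rmult_le_pos; [lra| apply Rmult_le_pos; nra]].
    - intros t Ht. unfold W; cbv beta. destruct (HM bb t ltac:(split; lra)) as [Hu1 [Hv1 _]].
      apply abs_bnd in Hu1. apply abs_bnd in Hv1.
      assert (He1 : exp ((- lam) * t) <= 1) by (rewrite <- exp_0; apply exp_le; nra).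
      assert (He2 : 1 <= exp (C * t)) by (rewrite <- exp_0; apply exp_le; nra).
      pose proof (exp_pos ((- lam) * t)).
      assert (Hb1 : 1 <= bb) by (unfold bb; lra).
      assert (Hb2 : 2 * M <= del * bb).
      { unfold bb. assert (del * (2 * M / del) = 2 * M) by (field; lra). nra. }
      assert (exp ((- lam) * t) * (v bb t - u bb t) >= - 2 * M) by nra.
      assert (Hq : exp (C * t) * (1 + bb * bb) >= 1 + bb * bb).
      { assert (0 <= (exp (C * t) - 1) * (1 + bb * bb)) by (apply Rmult_le_pos; nra). nra. }
      assert (del * (exp (C * t) * (1 + bb * bb)) >= del * (1 + bb * bb)) by (apply Rmult_ge_compat_l; lra).
      assert (del * (bb * bb) >= del * bb) by (apply Rmult_ge_compat_l; nra).
      nra.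
    - intros r t Hr Ht Hw Hwr Hwrr. unfold W, WR, WRR, WT in *; cbv beta in *.
      assert (Hdm : dom a T r t) by (split; lra).
      rewrite (pde_diff _ _ _ _ _ _ _ _ _ _ _ r t Hsu Hsv Ha Hdm).
      destruct (HM r t Hdm) as [Hu1 [Hv1 Hvr1]].
      apply abs_bnd in Hu1. apply abs_bnd in Hv1. apply abs_bnd in Hvr1.
      set (E := exp ((- lam) * t)) in *. set (F := exp (C * t)) in *.
      assert (HE : 0 < E) by apply exp_pos. assert (HF : 0 < F) by apply exp_pos.
      set (Z := v r t - u r t) in *. set (Zr := vr r t - ur r t) in *. set (Zrr := vrr r t - urr r t) in *.
      set (c := INR N * (u r t + v r t) + r * vr r t).
      assert (Hc : c < lam) by (unfold c, lam; nra).
      assert (HQ : E * Zr = - 2 * del * F * r) by lra.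
      assert (HS : E * Zrr >= - 2 * del * F) by lra.
      assert (HP : E * Z < 0).
      { assert (0 <= del * (F * (1 + r * r))) by (apply Rmult_le_pos; [lra| apply Rmult_le_pos; nra]). lra. }
      assert (H2 : ((INR N + 1) / r + r * u r t) * (E * Zr) = - 2 * del * F * (INR N + 1) - 2 * del * F * r * r * u r t)
        by (rewrite HQ; field; lra).
      assert (H3 : (c - lam) * (E * Z) > 0) by nra.
      assert (Hbr : 0 <= C * (1 + r * r) - 2 - 2 * (INR N + 1) - 2 * r * r * u r t) .
      { assert (0 <= INR N * (r * r)) by (apply Rmult_le_pos; nra).
        assert (0 <= (r * r) * (M - u r t)) by (apply Rmult_le_pos; nra). unfold C. nra. }
      assert (H4 : 0 <= del * F * (C * (1 + r * r) - 2 - 2 * (INR N + 1) - 2 * r * r * u r t)).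
      { apply Rmult_le_pos; [|lra]. nra. }
      assert (Hid : - lam * E * Z + E * (Zrr + ((INR N + 1) / r + r * u r t) * Zr + c * Z) + del * (C * F * (1 + r * r))
                = E * Zrr + ((INR N + 1) / r + r * u r t) * (E * Zr) + (c - lam) * (E * Z) + del * (C * F * (1 + r * r))) by ring.
      fold c. rewrite Hid, H2. nra. }
  specialize (Hcore r0 t0 ltac:(unfold bb; lra) ltac:(lra)). unfold W in Hcore. fold E0 F0 in Hcore.
  assert (Hx : del * (F0 * (1 + r0 * r0)) = - E0 * (v r0 t0 - u r0 t0) / 2).
  { unfold del. field. split; nra. }
  nra.
Qed.

Theorem lemma2p2 (N : nat) (a T : R)
  (u ur urr ut v vr vrr vt : R -> R -> R) :
  (3 <= N)%nat -> 0 < a -> 0 < T ->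
  classical_solution N a T u ur urr ut ->
  classical_solution N a T v vr vrr vt ->
  (forall r, a <= r -> u r 0 < v r 0) ->
  (forall t, 0 <= t < T -> u a t < v a t) ->
  (exists M, forall r t, dom a T r t ->
     Rabs (u r t) <= M /\ Rabs (v r t) <= M /\ Rabs (r * vr r t) <= M) ->
  forall r t, dom a T r t -> u r t < v r t.
Proof.
  intros _ Ha HT Hsu Hsv Hinit Hbd [M HM] r0 t0 Hd0.
  assert (Hs1 := step1 N a T u ur urr ut v vr vrr vt M Ha HT Hsu Hsv Hinit Hbd HM).
  assert (HM0 : 0 <= M) by (destruct (HM a 0 ltac:(split; lra)) as [H _]; pose proof (Rabs_pos (u a 0)); lra).
  assert (HN : 0 <= INR N) by apply pos_INR.
  destruct Hd0 as [Hr0 Ht0].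
  set (bb := r0 + 1).
  assert (Hbb : a < bb) by (unfold bb; lra).
  set (lam := 2 * INR N * M + M + 1).
  assert (HNM : 0 <= INR N * M) by nra.
  assert (Hlam : 0 < lam) by (unfold lam; lra).
  set (B := (INR N + 1) / a + bb * M).
  assert (HB : 0 <= B).
  { unfold B. apply Rplus_le_le_0_compat; [|nra]. unfold Rdiv. apply Rmult_le_pos; [lra|].
    left; apply Rinv_0_lt_compat; lra. }
  set (al := B + 2 * lam + 1).
  assert (Hal : 0 < al) by (unfold al; lra).
  assert (Hsub : forall r t, Rect a bb t0 r t -> dom a T r t).
  { intros r t [H1 H2]. split; lra. }
  assert (Hcu := proj1 (proj1 Hsu)). assert (Hcv := proj1 (proj1 Hsv)).
  assert (Hjz : jc (Rect a bb t0) (fun r t => v r t - u r t)).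
  { apply (jc_ext _ (fun r t => v r t + (-1) * u r t)); [intros; ring|].
    apply jc_plus; [|apply jc_scal]; eapply jc_sub; eauto. }
  destruct (min_r a bb t0 _ 0 Hjz ltac:(lra) ltac:(lra)) as [rm [Hrm Hmin1]].
  destruct (min_t a bb t0 _ a Hjz ltac:(lra) ltac:(lra)) as [tm [Htm Hmin2]].
  cbv beta in Hmin1, Hmin2.
  set (mu := Rmin (v rm 0 - u rm 0) (v a tm - u a tm)).
  assert (Hmu : 0 < mu).
  { apply Rmin_pos; [specialize (Hinit rm ltac:(lra))| specialize (Hbd tm ltac:(lra))]; lra. }
  set (E0 := exp ((- lam) * t0)).
  assert (HE0 : 0 < E0) by apply exp_pos.
  assert (HE01 : E0 <= 1) by (unfold E0; rewrite <- exp_0; apply exp_le; nra).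
  set (eps := E0 * mu).
  assert (Heps : 0 < eps) by (unfold eps; nra).
  set (Gb := exp ((- al) * bb)).
  assert (HGb : 0 < Gb) by apply exp_pos.
  set (W := fun r t => exp ((- lam) * t) * (v r t - u r t) - eps * (exp ((- al) * r) - Gb)).
  set (WR := fun r t => exp ((- lam) * t) * (vr r t - ur r t) + eps * al * exp ((- al) * r)).
  set (WRR := fun r t => exp ((- lam) * t) * (vrr r t - urr r t) - eps * al * al * exp ((- al) * r)).
  set (WT := fun r t => (- lam) * exp ((- lam) * t) * (v r t - u r t)
                        + exp ((- lam) * t) * (vt r t - ut r t)).
  assert (Hcore : forall r t, a <= r <= bb -> 0 <= t <= t0 -> 0 <= W r t).
  { apply (core a bb t0 W WR WRR WT Hbb (proj1 Ht0)).
    - unfold W. apply (jc_ext _ (fun r t => exp ((- lam) * t) * (v r t - u r t) + (- eps) * (exp ((- al) * r) - Gb))); [intros; ring|].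
      apply jc_plus.
      + apply jc_mult; [apply jc_t; intro; apply cont_expk| exact Hjz].
      + apply jc_scal. apply jc_r. intro x. apply derivable_continuous_pt.
        exists ((- al) * exp ((- al) * x) - 0). apply dpl_minus; [apply dpl_expk| apply dpl_const].
    - intros r t Hr Ht. destruct (C21_dr _ _ _ _ _ _ r t (proj1 Hsu) ltac:(lra) ltac:(lra)) as [Du _].
      destruct (C21_dr _ _ _ _ _ _ r t (proj1 Hsv) ltac:(lra) ltac:(lra)) as [Dv _].
      pose proof (dpl_minus _ _ _ _ _ (dpl_scal (exp ((- lam) * t)) _ _ _ (dpl_minus _ _ _ _ _ Dv Du))
         (dpl_scal eps _ _ _ (dpl_minus _ _ _ _ _ (dpl_expk (- al) r) (dpl_const Gb r)))) as H.
      eapply dpl_ext; [| | exact H]; [intro; unfold W; reflexivity| unfold WR; ring].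
    - intros r t Hr Ht. destruct (C21_dr _ _ _ _ _ _ r t (proj1 Hsu) ltac:(lra) ltac:(lra)) as [_ Du].
      destruct (C21_dr _ _ _ _ _ _ r t (proj1 Hsv) ltac:(lra) ltac:(lra)) as [_ Dv].
      pose proof (dpl_plus _ _ _ _ _ (dpl_scal (exp ((- lam) * t)) _ _ _ (dpl_minus _ _ _ _ _ Dv Du))
         (dpl_scal (eps * al) _ _ _ (dpl_expk (- al) r))) as H.
      eapply dpl_ext; [| | exact H]; [intro; unfold WR; cbv beta; ring| unfold WRR; ring].
    - intros r t Hr Ht. assert (Du := C21_dt _ _ _ _ _ _ r t (proj1 Hsu) ltac:(lra) ltac:(lra)).
      assert (Dv := C21_dt _ _ _ _ _ _ r t (proj1 Hsv) ltac:(lra) ltac:(lra)).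
      pose proof (dpl_minus _ _ _ _ _ (dpl_mult _ _ _ _ _ (dpl_expk (- lam) t) (dpl_minus _ _ _ _ _ Dv Du))
         (dpl_const (eps * (exp ((- al) * r) - Gb)) t)) as H.
      eapply dpl_ext; [| | exact H]; [intro; unfold W; reflexivity| unfold WT; ring].
    - intros r Hr. unfold W; cbv beta. rewrite Rmult_0_r, exp_0.
      specialize (Hmin1 r Hr).
      assert (mu <= v rm 0 - u rm 0) by apply Rmin_l.
      assert (exp ((- al) * r) <= 1) by (rewrite <- exp_0; apply exp_le; nra).
      assert (eps <= mu) by (unfold eps; nra).
      assert (eps * (exp ((- al) * r) - Gb) <= eps * 1) by (apply Rmult_le_compat_l; lra).
      lra.
    - intros t Ht. unfold W; cbv beta.
      specialize (Hmin2 t Ht).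
      assert (mu <= v a tm - u a tm) by apply Rmin_r.
      assert (exp ((- al) * a) <= 1) by (rewrite <- exp_0; apply exp_le; nra).
      assert (E0 <= exp ((- lam) * t)) by (unfold E0; apply exp_le; nra).
      assert (eps <= exp ((- lam) * t) * (v a t - u a t)) by (unfold eps; nra).
      assert (eps * (exp ((- al) * a) - Gb) <= eps * 1) by (apply Rmult_le_compat_l; lra).
      lra.
    - intros t Ht. unfold W; cbv beta. unfold Gb. rewrite Rminus_diag, Rmult_0_r, Rminus_0_r.
      apply Rmult_le_pos; [left; apply exp_pos|].
      assert (u bb t <= v bb t) by (apply Hs1; split; lra). lra.
    - intros r t Hr Ht Hw Hwr Hwrr. unfold W, WR, WRR, WT in *; cbv beta in *.
      assert (Hdm : dom a T r t) by (split; lra).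
      rewrite (pde_diff _ _ _ _ _ _ _ _ _ _ _ r t Hsu Hsv Ha Hdm).
      destruct (HM r t Hdm) as [Hu1 [Hv1 Hvr1]].
      apply abs_bnd in Hu1. apply abs_bnd in Hv1. apply abs_bnd in Hvr1.
      set (E := exp ((- lam) * t)) in *. set (G := exp ((- al) * r)) in *.
      assert (HE : 0 < E) by apply exp_pos. assert (HG : 0 < G) by apply exp_pos.
      set (Z := v r t - u r t) in *. set (Zr := vr r t - ur r t) in *. set (Zrr := vrr r t - urr r t) in *.
      set (c := INR N * (u r t + v r t) + r * vr r t).
      assert (Hc : c < lam) by (unfold c, lam; nra).
      assert (Hc' : - lam < c) by (unfold c, lam; nra).
      set (b := (INR N + 1) / r + r * u r t).
      assert (Hb : b <= B).
      { unfold b, B. assert ((INR N + 1) / r <= (INR N + 1) / a).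
        { unfold Rdiv. apply Rmult_le_compat_l; [lra|]. apply Rinv_le_contravar; lra. }
        assert (r * u r t <= bb * M) by nra. lra. }
      assert (HQ : E * Zr = - eps * al * G) by lra.
      assert (HS : E * Zrr >= eps * al * al * G) by lra.
      assert (HP : - (E * Z) > - eps * G) by (assert (0 < eps * Gb) by (apply Rmult_lt_0_compat; lra); lra).
      assert (H3 : (c - lam) * (E * Z) > - 2 * lam * eps * G).
      { destruct (Rle_dec 0 (- (E * Z))).
        - assert (0 <= (lam - c) * (- (E * Z))) by (apply Rmult_le_pos; lra).
          assert (0 < lam * eps * G) by (apply Rmult_lt_0_compat; [nra|lra]). nra.
        - assert ((lam - c) * (- (E * Z)) >= 2 * lam * (- (E * Z))) by nra.
          assert (2 * lam * (- (E * Z)) > 2 * lam * (- eps * G)) by nra. nra. }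
      assert (Hal2 : al * al - b * al - 2 * lam > 0).
      { assert (al * al - b * al >= al * al - B * al) by nra. unfold al in *. nra. }
      assert (H5 : eps * G * (al * al - b * al - 2 * lam) > 0) by (apply Rmult_gt_0_compat; [nra| lra]).
      assert (Hid : - lam * E * Z + E * (Zrr + b * Zr + c * Z)
                = E * Zrr + b * (E * Zr) + (c - lam) * (E * Z)) by ring.
      fold c b. rewrite Hid, HQ. nra. }
  specialize (Hcore r0 t0 ltac:(unfold bb; lra) ltac:(lra)). unfold W in Hcore; cbv beta in Hcore.
  assert (Hg : exp ((- al) * bb) < exp ((- al) * r0)) by (apply exp_increasing; unfold bb; nra).
  fold Gb in Hg.
  assert (0 < eps * (exp ((- al) * r0) - Gb)) by (apply Rmult_lt_0_compat; lra).
  pose proof (exp_pos ((- lam) * t0)).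
  assert (0 < exp ((- lam) * t0) * (v r0 t0 - u r0 t0)) by lra.
  assert (0 < v r0 t0 - u r0 t0).
  { apply Rnot_le_lt. intro Hn. assert (exp ((- lam) * t0) * (v r0 t0 - u r0 t0) <= 0); [|lra].
    assert (0 <= exp ((- lam) * t0) * (- (v r0 t0 - u r0 t0))) by (apply Rmult_le_pos; lra). lra. }
  lra.
Qed.
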